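(* In the standing setup, let $g=B^{\rm T}f$ with $f=f_0$ be associated to $f$ via $B=\alpha I+\beta A+\gamma A^2$, $B^2=I$. Then for every vector $v\in\mathbb C^6$, $$g''v=f''(B^{\rm T}v),\qquad f''v=g''(B^{\rm T}v),$$ equivalently $B^{\rm T}(f''v)=f''(B^{\rm T}v)$ and $B^{\rm T}(g''v)=g''(B^{\rm T}v)$.
   Context: Standing setup: $J=\begin{pmatrix}0&I_3\\-I_3&0\end{pmatrix}$ ($6\times6$). $A$ is a fixed real $6\times 6$ skew-Hamiltonian matrix ($A^{\rm T}J=JA$). $H_0$ is a homogeneous cubic polynomial on $\mathbb R^6$ with $A\nabla^2H_0(x)=\nabla^2H_0(x)A^{\rm T}$ for all $x$, $H_1,H_2$ homogeneous cubic polynomials with $\nabla H_1=A\nabla H_0$, $\nabla H_2=A\nabla H_1$, $f_i=J\nabla H_i$. For a quadratic vector field $h$, the second derivative $h''$ is a constant tensor, and for a vector $v$, $h''v$ denotes the $6\times6$ matrix with entries $(h''v)_{ij}=\sum_\ell \frac{\partial^2h_i}{\partial x_j\partial x_\ell}v_\ell$. Associated field: if $B=\alpha I+\beta A+\gamma A^2$ with $B^2=I$, then $g=B^{\rm T}f_0$. *)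

(* Defs.v *)
From HB Require Import structures.
From mathcomp Require Import all_boot all_order all_algebra.
Set Implicit Arguments. Unset Strict Implicit. Unset Printing Implicit Defensive.
Import Order.TTheory GRing.Theory Num.Theory.
Local Open Scope ring_scope.

(* Scalars live in a numeric algebraically closed field C (the complex
   numbers are the intended instance); "real" objects are those whose
   entries satisfy [\is Num.real]. *)

(* The symplectic matrix J = [[0, I_3], [-I_3, 0]]. *)
Definition Jmx {C : numClosedFieldType} : 'M[C]_6 :=
  \matrix_(i < 6, j < 6)
    if (i < 3)%N && (val j == (val i + 3)%N) then 1
    else if (3 <= i)%N && ((val j + 3)%N == val i) then -1 else 0.

(* A homogeneous cubic polynomial on C^6, given by its coefficients:
   H(x) = sum_{i,j,k} T i j k x_i x_j x_k. *)
Definition cubic (C : numClosedFieldType) := 'I_6 -> 'I_6 -> 'I_6 -> C.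

Definition real_cubic {C : numClosedFieldType} (T : cubic C) : Prop :=
  forall i j k, T i j k \is Num.real.

Definition cubic_eval {C : numClosedFieldType} (T : cubic C) (x : 'cV[C]_6) : C :=
  \sum_(i < 6) \sum_(j < 6) \sum_(k < 6) T i j k * x i 0 * x j 0 * x k 0.

(* A quadratic vector field on C^6: h_i(x) = sum_{j,k} Q i j k x_j x_k. *)
Definition quadfield (C : numClosedFieldType) := 'I_6 -> 'I_6 -> 'I_6 -> C.

Definition quad_eval {C : numClosedFieldType} (Q : quadfield C) (x : 'cV[C]_6)
  : 'cV[C]_6 :=
  \col_(i < 6) \sum_(j < 6) \sum_(k < 6) Q i j k * x j 0 * x k 0.

Definition gradQ {C : numClosedFieldType} (T : cubic C) : quadfield C :=
  fun m j k => T m j k + T j m k + T j k m.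

Definition grad {C : numClosedFieldType} (T : cubic C) (x : 'cV[C]_6) : 'cV[C]_6 :=
  quad_eval (gradQ T) x.

Definition hess {C : numClosedFieldType} (T : cubic C) (x : 'cV[C]_6) : 'M[C]_6 :=
  \matrix_(m < 6, n < 6) \sum_(k < 6)
     (T m n k + T m k n + T n m k + T k m n + T n k m + T k n m) * x k 0.

Definition mulQ {C : numClosedFieldType} (M : 'M[C]_6) (Q : quadfield C)
  : quadfield C :=
  fun i j k => \sum_(l < 6) M i l * Q l j k.

(* h'' v : (h''v)_{ij} = sum_l d^2 h_i / dx_j dx_l * v_l. *)
Definition d2 {C : numClosedFieldType} (Q : quadfield C) (v : 'cV[C]_6) : 'M[C]_6 :=
  \matrix_(i < 6, j < 6) \sum_(l < 6) (Q i j l + Q i l j) * v l 0.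

(* Main.v *)
Require Import Defs.
From HB Require Import structures.
From mathcomp Require Import all_boot all_order all_algebra.
From mathcomp Require Import ring.
Import Order.TTheory GRing.Theory Num.Theory.
Local Open Scope ring_scope.

Section Aux.
Variable C : numClosedFieldType.

Definition hs (T : cubic C) (m n k : 'I_6) : C :=
  T m n k + T m k n + T n m k + T k m n + T n k m + T k n m.

Lemma hs12 T m n k : hs T m n k = hs T n m k.
Proof. rewrite /hs; ring. Qed.
Lemma hs23 T m n k : hs T m n k = hs T m k n.
Proof. rewrite /hs; ring. Qed.

Lemma hessE T x m n : hess T x m n = \sum_(k < 6) hs T m n k * x k 0.
Proof. by rewrite mxE. Qed.

Lemma hess_delta T c m n : hess T (delta_mx c 0) m n = hs T m n c.
Proof.
rewrite hessE (bigD1 c) //= big1 ?addr0; first by rewrite mxE !eqxx mulr1.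
by move=> k /negbTE kc; rewrite mxE kc /= mulr0.
Qed.

Lemma delta_real (c : 'I_6) : (delta_mx c 0 : 'cV[C]_6) \is a realmx.
Proof.
apply/mxOverP => i j; rewrite mxE; case: (_ && _); by rewrite ?real0 ?real1.
Qed.

Lemma KA (A : 'M[C]_6) T :
  (forall x : 'cV[C]_6, x \is a realmx -> A *m hess T x = hess T x *m A^T) ->
  forall a b c, \sum_j A a j * hs T j b c = \sum_j A b j * hs T j a c.
Proof.
move=> H a b c; have := H _ (delta_real c).
move/matrixP => /(_ a b); rewrite !mxE.
under eq_bigr do rewrite hess_delta.
under [RHS]eq_bigr do rewrite hess_delta mxE.
move=> ->; apply: eq_bigr => j _; by rewrite mulrC hs12.
Qed.

Lemma hessAT (A : 'M[C]_6) T :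
  (forall x : 'cV[C]_6, x \is a realmx -> A *m hess T x = hess T x *m A^T) ->
  forall v, hess T (A^T *m v) = A *m hess T v.
Proof.
move=> H v; apply/matrixP => m n.
rewrite hessE mxE.
under eq_bigr do rewrite mxE big_distrr /=.
under [RHS]eq_bigr do rewrite hessE big_distrr /=.
rewrite exchange_big [RHS]exchange_big /=.
apply: eq_bigr => l _.
transitivity ((\sum_k A l k * hs T k m n) * v l 0).
  rewrite big_distrl; apply: eq_bigr => k _; rewrite mxE.
  by rewrite (hs12 T m n k) hs23 hs12 hs23 /=; rewrite -mulrA mulrCA mulrA.
transitivity ((\sum_k A m k * hs T k n l) * v l 0); last first.
  rewrite big_distrl; apply: eq_bigr => k _; by rewrite mulrA.
congr (_ * _); rewrite (@KA A T H l m n).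
by apply: eq_bigr => k _; rewrite hs23.
Qed.

Lemma hessD (T : cubic C) x y : hess T (x + y) = hess T x + hess T y.
Proof.
apply/matrixP => m n; rewrite !mxE -big_split; apply: eq_bigr => k _.
by rewrite !mxE mulrDr.
Qed.

Lemma hessZ (T : cubic C) a x : hess T (a *: x) = a *: hess T x.
Proof.
apply/matrixP => m n; rewrite !mxE big_distrr; apply: eq_bigr => k _.
rewrite !mxE; by rewrite mulrCA.
Qed.

Lemma d2_mulQ (M : 'M[C]_6) (Q : quadfield C) v : d2 (mulQ M Q) v = M *m d2 Q v.
Proof.
apply/matrixP => i j; rewrite !mxE.
under [RHS]eq_bigr do rewrite mxE big_distrr /=.
rewrite [RHS]exchange_big /=; apply: eq_bigr => l _.
rewrite /mulQ -big_split big_distrl /=; apply: eq_bigr => p _; by rewrite -mulrDr -mulrA.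
Qed.

Lemma d2_grad (T : cubic C) v : d2 (gradQ T) v = hess T v.
Proof.
apply/matrixP => i j; rewrite !mxE; apply: eq_bigr => k _.
congr (_ * _); rewrite /gradQ; ring.
Qed.

End Aux.

Theorem mainTheorem9 (C : numClosedFieldType)
  (A : 'M[C]_6) (H0 H1 H2 : cubic C) (alpha beta gamma : C) :
  A \is a realmx ->
  A^T *m Jmx = Jmx *m A ->
  real_cubic H0 -> real_cubic H1 -> real_cubic H2 ->
  (forall x : 'cV[C]_6, x \is a realmx -> A *m hess H0 x = hess H0 x *m A^T) ->
  (forall x : 'cV[C]_6, x \is a realmx -> grad H1 x = A *m grad H0 x) ->
  (forall x : 'cV[C]_6, x \is a realmx -> grad H2 x = A *m grad H1 x) ->
  alpha \is Num.real -> beta \is Num.real -> gamma \is Num.real ->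
  let B := alpha%:M + beta *: A + gamma *: (A *m A) in
  B *m B = 1%:M ->
  let f := mulQ Jmx (gradQ H0) in
  let g := mulQ B^T f in
  forall v : 'cV[C]_6,
    [/\ d2 g v = d2 f (B^T *m v),
        d2 f v = d2 g (B^T *m v),
        B^T *m d2 f v = d2 f (B^T *m v)
      & B^T *m d2 g v = d2 g (B^T *m v)].
Proof.
move=> _ HJ _ _ _ Hh _ _ _ _ _ B HB f g v.
have Df w : d2 f w = Jmx *m hess H0 w by rewrite /f d2_mulQ d2_grad.
have Dg w : d2 g w = B^T *m (Jmx *m hess H0 w) by rewrite /g d2_mulQ Df.
have BT : B^T = alpha%:M + beta *: A^T + gamma *: (A^T *m A^T).
  by rewrite /B !linearD !linearZ /= tr_scalar_mx trmx_mul.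
have BJ : B^T *m Jmx = Jmx *m B.
  rewrite BT /B !mulmxDl !mulmxDr -!scalemxAl -!scalemxAr mul_scalar_mx mul_mx_scalar.
  by rewrite -!mulmxA !HJ mulmxA HJ -mulmxA.
have BB : B^T *m B^T = 1%:M by rewrite -trmx_mul HB tr_scalar_mx.
have hB : hess H0 (B^T *m v) = B *m hess H0 v.
  rewrite BT !mulmxDl !hessD -!scalemxAl !hessZ mul_scalar_mx hessZ.
  by rewrite -!mulmxA !(@hessAT C A H0 Hh) mul_scalar_mx.
have K : B^T *m (Jmx *m hess H0 v) = Jmx *m (B *m hess H0 v) by rewrite !mulmxA BJ.
rewrite !Dg !Df hB; split.
- exact: K.
- by rewrite -K mulmxA BB mul1mx.
- exact: K.
- by rewrite -K.
Qed.
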